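(* For $n\geq1$ let $\ell_n=\sqrt[n]{n!}$ and $x_n=\log(\ell_{n+1}/\ell_n)$. Then for every integer $n\geq 2$, $$x_n\leq \frac1n-\frac{\log n}{2n(n+1)}-\frac{\log(2\pi)}{2n(n+1)}-\frac{83}{144n^3}+\frac{3}{2n^4},$$ and for every integer $n\geq3$, $$x_n\leq \frac1n-\frac{\log n}{2n(n+1)}-\frac{\log(2\pi)}{2n(n+1)}.$$
   Context: $\log$ denotes the natural logarithm. *)

(* Defs.v *)
From Stdlib Require Import Reals Arith Factorial.
Open Scope R_scope.

Definition ell (n : nat) : R := Rpower (INR (fact n)) (/ INR n).

Definition xseq (n : nat) : R := ln (ell (S n) / ell n).

(* Main.v *)
Require Import Defs.
From Stdlib Require Import Reals Lra Psatz Arith Factorial.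
From Coquelicot Require Import Coquelicot.
Open Scope R_scope.

Lemma lnA (x : R) : 0 <= x -> ln (1 + x) <= x - x^2/2 + x^3/3.
Proof.
  intros Hx. destruct (Req_dec x 0) as [->|Hx0].
  { rewrite Rplus_0_r, ln_1. lra. }
  set (f := fun y => y - y^2/2 + y^3/3 - ln (1+y)).
  assert (H := MVT_cor2 f (fun y => y^3/(1+y)) 0 x ltac:(lra)).
  destruct H as [c [Hc1 Hc2]].
  { intros c Hc. apply is_derive_Reals. unfold f. auto_derive. lra. field. lra. }
  unfold f in Hc1. rewrite Rplus_0_r, ln_1 in Hc1.
  assert (0 <= c^3/(1+c) * (x - 0)).
  { apply Rmult_le_pos. apply Rdiv_le_0_compat. apply pow_le; lra. lra. lra. }
  lra.
Qed.

Lemma lnB (t : R) : 0 <= t < 1 -> 2*t + 2*t^3/3 <= ln (1 + t) - ln (1 - t).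
Proof.
  intros Ht. destruct (Req_dec t 0) as [->|Ht0].
  { rewrite Rplus_0_r, Rminus_0_r, ln_1. lra. }
  set (f := fun y => ln (1+y) - ln (1-y) - 2*y - 2*y^3/3).
  assert (H := MVT_cor2 f (fun y => 2*y^4/(1-y^2)) 0 t ltac:(lra)).
  destruct H as [c [Hc1 Hc2]].
  { intros c Hc. apply is_derive_Reals. unfold f. auto_derive. repeat split; lra. field. repeat split; try lra; nra. }
  unfold f in Hc1. rewrite Rplus_0_r, Rminus_0_r, ln_1 in Hc1.
  assert (0 <= 2*c^4/(1-c^2) * (t - 0)).
  { apply Rmult_le_pos. apply Rdiv_le_0_compat. assert (0 <= c^4) by (apply pow_le; lra). lra. nra. lra. }
  lra.
Qed.

Definition I (k : nat) : R := RInt (fun x => sin x ^ k) 0 (PI/2).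

Lemma exI k : ex_RInt (fun x => sin x ^ k) 0 (PI/2).
Proof. apply (@ex_RInt_continuous R_CompleteNormedModule). intros z _. apply (@ex_derive_continuous R_AbsRing R_NormedModule). auto_derive. easy. Qed.

Lemma I0 : I 0 = PI/2.
Proof. unfold I. simpl. rewrite RInt_const. compute -[PI Rminus Rmult]. lra. Qed.

Lemma I1 : I 1 = 1.
Proof.
  unfold I.
  assert (H := @is_RInt_derive R_CompleteNormedModule (fun x => - cos x) (fun x => sin x ^ 1) 0 (PI/2)).
  assert (H' := H ltac:(intros x _; auto_derive; [easy| simpl; ring])
     ltac:(intros x _; apply (@ex_derive_continuous R_AbsRing R_NormedModule); auto_derive; easy)).
  rewrite (is_RInt_unique _ _ _ _ H').
  simpl. rewrite cos_PI2, cos_0. unfold minus, plus, opp; simpl. lra.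
Qed.

Lemma Irec k : INR (S (S k)) * I (S (S k)) = INR (S k) * I k.
Proof.
  unfold I.
  assert (H := @is_RInt_derive R_CompleteNormedModule (fun x => sin x ^ (S k) * cos x)
     (fun x => INR (S k) * sin x ^ k - INR (S (S k)) * sin x ^ (S (S k))) 0 (PI/2)).
  assert (Hd : forall x : R, is_derive (fun x => sin x ^ (S k) * cos x) x
     (INR (S k) * sin x ^ k - INR (S (S k)) * sin x ^ (S (S k)))).
  { intros x. auto_derive. easy. rewrite !S_INR. assert (Hs := sin2_cos2 x). unfold Rsqr in Hs.
    simpl. change (match k with 0%nat => 1 | S _ => INR k + 1 end) with (INR (S k)). rewrite S_INR.
    replace (1 * cos x * ((INR k + 1) * sin x ^ k) * cos x) with ((INR k + 1) * sin x ^ k * (cos x * cos x)) by ring.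
    replace (cos x * cos x) with (1 - sin x * sin x) by lra. ring. }
  assert (H' := H ltac:(intros x _; apply Hd)
     ltac:(intros x _; apply (@ex_derive_continuous R_AbsRing R_NormedModule); auto_derive; easy)).
  fold (I k). fold (I (S (S k))). set (c1 := INR (S k)) in *. set (c2 := INR (S (S k))) in *.
  assert (H2 : is_RInt (fun x => c1 * sin x ^ k - c2 * sin x ^ S (S k)) 0 (PI/2) (c1 * I k - c2 * I (S(S k)))).
  { exact (@is_RInt_minus R_NormedModule _ _ _ _ _ _ (@is_RInt_scal R_NormedModule _ _ _ c1 _ (RInt_correct _ _ _ (exI k)))
            (@is_RInt_scal R_NormedModule _ _ _ c2 _ (RInt_correct _ _ _ (exI (S (S k)))))). }
  assert (E := is_RInt_unique _ _ _ _ H'). 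
  apply (@is_RInt_unique R_CompleteNormedModule) in H2. rewrite E in H2. simpl in H2. rewrite cos_PI2, sin_0 in H2.
  unfold minus, plus, opp in H2; simpl in H2. lra.
Qed.

Lemma Imono k : I (S k) <= I k.
Proof.
  unfold I. apply RInt_le. generalize PI_RGT_0; lra. apply exI. apply exI.
  intros x Hx. assert (H1 : 0 <= sin x) by (apply sin_ge_0; generalize PI_RGT_0; lra).
  assert (H2 := proj2 (SIN_bound x)). assert (H3 : 0 <= sin x ^ k) by (apply pow_le; lra).
  simpl. nra.
Qed.

Fixpoint a (n : nat) : R := match n with 0%nat => 1 | S m => a m * (2 * INR m + 1) / (2 * INR m + 2) end.

Lemma apos n : 0 < a n.
Proof. induction n; simpl. lra. assert (0 <= INR n) by apply pos_INR.
  apply Rdiv_lt_0_compat; [apply Rmult_lt_0_compat|]; lra. Qed.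

Lemma INR2S n : INR (S (S (2 * n))) = 2 * INR n + 2.
Proof. rewrite !S_INR, mult_INR. simpl. ring. Qed.
Lemma INR1S n : INR (S (2 * n)) = 2 * INR n + 1.
Proof. rewrite !S_INR, mult_INR. simpl. ring. Qed.

Lemma Ieven n : I (2 * n) = PI / 2 * a n.
Proof.
  induction n. simpl. rewrite I0. lra.
  replace (2 * S n)%nat with (S (S (2 * n))) by lia.
  assert (H := Irec (2 * n)). rewrite INR2S, INR1S, IHn in H.
  assert (0 <= INR n) by apply pos_INR. simpl a.
  apply (Rmult_eq_reg_l (2 * INR n + 2)). rewrite H. field. lra. lra.
Qed.

Lemma Iodd n : I (S (2 * n)) * a n * (2 * INR n + 1) = 1.
Proof.
  induction n. simpl. rewrite I1. lra.
  replace (S (2 * S n))%nat with (S (S (S (2 * n)))) by lia.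
  assert (H := Irec (S (2 * n))). 
  replace (INR (S (S (S (2 * n))))) with (2 * INR n + 3) in H by (rewrite !S_INR, mult_INR; simpl; ring).
  replace (INR (S (S (2 * n)))) with (2 * INR n + 2) in H by (rewrite !S_INR, mult_INR; simpl; ring).
  assert (0 <= INR n) by apply pos_INR. simpl a. rewrite S_INR.
  replace (I (S (S (S (2 * n))))) with ((2 * INR n + 2) * I (S (2 * n)) / (2 * INR n + 3)).
  2:{ rewrite <- H. field. lra. }
  transitivity (I (S (2 * n)) * a n * (2 * INR n + 1)); [field; lra | exact IHn].
Qed.

Lemma wallis n : PI * INR (S n) * a (S n) ^ 2 <= 1.
Proof.
  assert (H1 := Imono (S (2 * n))).
  replace (S (S (2 * n))) with (2 * S n)%nat in H1 by lia.
  rewrite Ieven in H1. assert (H2 := Iodd n). assert (H3 := apos n). assert (H4 := apos (S n)).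
  assert (0 <= INR n) by apply pos_INR.
  assert (E : a n * (2 * INR n + 1) = a (S n) * (2 * INR n + 2)) by (simpl; field; lra).
  replace (I (S (2 * n)) * a n * (2 * INR n + 1)) with (I (S (2 * n)) * (a n * (2 * INR n + 1))) in H2 by ring.
  rewrite E in H2. rewrite S_INR.
  assert (HI : I (S (2 * n)) = 1 / (a (S n) * (2 * INR n + 2))).
  { rewrite <- H2. field. split; lra. }
  rewrite HI in H1.
  apply (Rmult_le_reg_r (/ (2 * a (S n)))). apply Rinv_0_lt_compat; lra.
  replace (1 * / (2 * a (S n))) with (1 / (a (S n) * (2 * INR n + 2)) * (INR n + 1)) by (field; lra).
  replace (PI * (INR n + 1) * a (S n) ^ 2 * / (2 * a (S n))) with (PI / 2 * a (S n) * (INR n + 1)) by (field; lra).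
  apply Rmult_le_compat_r; lra.
Qed.


Definition L (n : nat) : R := ln (INR (fact n)).
Definition d (n : nat) : R := L n - (INR n + /2) * ln (INR n) + INR n.

Lemma factpos n : 0 < INR (fact n).
Proof. apply lt_0_INR. apply lt_O_fact. Qed.

Lemma fact_a n : a n * 4 ^ n * INR (fact n) ^ 2 = INR (fact (2 * n)).
Proof.
  induction n. simpl. lra.
  replace (2 * S n)%nat with (S (S (2 * n))) by lia.
  rewrite (fact_simpl (S (2*n))), (fact_simpl (2*n)), (fact_simpl n), !mult_INR, INR2S, INR1S, <- IHn.
  simpl a. rewrite S_INR. assert (0 <= INR n) by apply pos_INR. simpl. field. lra.
Qed.

Lemma L_S n : L (S n) = ln (INR (S n)) + L n.
Proof. unfold L. rewrite fact_simpl, mult_INR, ln_mult. reflexivity. apply lt_0_INR; lia. apply factpos. Qed.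

Lemma L_2 n : L (2 * n) = ln (a n) + 2 * INR n * ln 2 + 2 * L n.
Proof.
  unfold L. rewrite <- fact_a. assert (H1 := apos n). assert (H2 := factpos n).
  rewrite ln_mult, ln_mult, ln_pow, ln_pow; try lra.
  replace 4 with (2*2) by lra. rewrite ln_mult by lra. simpl. ring.
  apply pow_lt; lra. apply Rmult_lt_0_compat. lra. apply pow_lt; lra. apply pow_lt; lra.
Qed.

Lemma K1 m : (1 <= m)%nat -> 2 * d m - d (2 * m) >= ln (2 * PI) / 2.
Proof.
  intros Hm. destruct m as [|n]. lia.
  assert (W := wallis n). assert (Ha := apos (S n)).
  assert (Hm1 : 0 < INR (S n)) by (apply lt_0_INR; lia).
  assert (Hp := PI_RGT_0).
  assert (Hl : ln (PI * INR (S n) * a (S n) ^ 2) <= 0).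
  { rewrite <- ln_1. destruct (Req_dec (PI * INR (S n) * a (S n) ^ 2) 1) as [E|E].
    rewrite E; lra. left. apply ln_increasing. apply Rmult_lt_0_compat. nra. apply pow_lt; lra. lra. }
  rewrite ln_mult, ln_mult, ln_pow in Hl; try lra; try nra.
  unfold d. replace (INR 2) with 2 in * by (simpl; lra). rewrite L_2, mult_INR, ln_mult, ln_mult; try lra. all: replace (INR 2) with 2 by (simpl; lra); lra.
Qed.

Lemma step_eq n : (1 <= n)%nat -> d n - d (S n) = (INR n + /2) * (ln (INR n + 1) - ln (INR n)) - 1.
Proof. intros. unfold d. rewrite L_S, S_INR. ring. Qed.

Lemma lnratio N : 0 < N -> ln (1 + /N) = ln (N + 1) - ln N.
Proof. intros. rewrite <- ln_div by lra. f_equal. field. lra. Qed.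

Lemma step_up n : (1 <= n)%nat -> d n - d (S n) <= / (2 * INR n) - / (2 * (INR n + 1)).
Proof.
  intros Hn. rewrite step_eq by lia. assert (HN : 1 <= INR n) by (apply (le_INR 1); lia).
  set (N := INR n) in *. set (x := / N).
  assert (Hx0 : 0 < x) by (apply Rinv_0_lt_compat; lra).
  assert (Hx1 : x <= 1) by (unfold x; rewrite <- Rinv_1; apply Rinv_le_contravar; lra).
  assert (HA := lnA x ltac:(lra)). unfold x in HA at 1. rewrite lnratio in HA by lra.
  assert (E1 : (N + /2) * (x - x^2/2 + x^3/3) - 1 = x^2/12 + x^3/6) by (unfold x; field; lra).
  assert (E2 : / (2 * N) - / (2 * (N + 1)) = x^2/(2*(1+x))) by (unfold x; field; split; lra).
  assert (E3 : x^2/(2*(1+x)) - (x^2/12 + x^3/6) = x^2*(5 - 3*x - 2*x^2)/(12*(1+x))) by (field; lra).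
  assert (P : 0 <= x^2*(5 - 3*x - 2*x^2)/(12*(1+x))).
  { apply Rdiv_le_0_compat. apply Rmult_le_pos. nra. nra. lra. }
  assert ((N + /2) * (ln (N + 1) - ln N) <= (N + /2) * (x - x^2/2 + x^3/3)).
  { apply Rmult_le_compat_l; lra. }
  lra.
Qed.

Lemma step_lo n : (1 <= n)%nat -> / (12 * INR n + 1) - / (12 * INR (S n) + 1) <= d n - d (S n).
Proof.
  intros Hn. rewrite step_eq by lia. rewrite S_INR. assert (HN : 1 <= INR n) by (apply (le_INR 1); lia).
  set (N := INR n) in *. set (t := / (2 * N + 1)).
  assert (Ht0 : 0 < t) by (apply Rinv_0_lt_compat; lra).
  assert (Ht1 : t < 1) by (unfold t; rewrite <- Rinv_1; apply Rinv_lt_contravar; lra).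
  assert (HB := lnB t ltac:(lra)).
  assert (E0 : ln (1 + t) - ln (1 - t) = ln (N + 1) - ln N).
  { replace (1 + t) with (2 * (N + 1) * t) by (unfold t; field; lra).
    replace (1 - t) with (2 * N * t) by (unfold t; field; lra).
    rewrite !ln_mult by lra. ring. }
  rewrite E0 in HB.
  assert (E1 : (N + /2) * (2*t + 2*t^3/3) - 1 = t^2/3) by (unfold t; field; lra).
  assert (E2 : t^2/3 - (/ (12 * N + 1) - / (12 * (N + 1) + 1)) = (24*N - 23) / (3 * (2*N+1)^2 * (12*N+1) * (12*N+13))) by (unfold t; field; repeat split; lra).
  assert (P : 0 <= (24*N - 23) / (3 * (2*N+1)^2 * (12*N+1) * (12*N+13))).
  { apply Rdiv_le_0_compat. lra. repeat apply Rmult_lt_0_compat; nra. }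
  assert ((N + /2) * (2*t + 2*t^3/3) <= (N + /2) * (ln (N + 1) - ln N)).
  { apply Rmult_le_compat_l; lra. }
  lra.
Qed.

Definition g (n : nat) : R := / (12 * INR n + 1).

Lemma tele_lo n k : (1 <= n)%nat -> g n - g (n + k) <= d n - d (n + k).
Proof.
  intros Hn. induction k. rewrite Nat.add_0_r. lra.
  rewrite Nat.add_succ_r. assert (H := step_lo (n + k) ltac:(lia)). unfold g in *. lra.
Qed.

Lemma tele_up m k : (1 <= m)%nat -> d m - d (m + k) <= / (2 * INR m) - / (2 * INR (m + k)).
Proof.
  intros Hm. induction k. rewrite Nat.add_0_r. lra.
  rewrite Nat.add_succ_r. assert (H := step_up (m + k) ltac:(lia)). rewrite S_INR. lra.
Qed.

Lemma dm_low m : (1 <= m)%nat -> ln (2 * PI) / 2 - / INR m <= d m - g m.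
Proof.
  intros Hm. assert (H1 := K1 m Hm). assert (H2 := tele_up m m Hm).
  replace (m + m)%nat with (2 * m)%nat in H2 by lia.
  assert (HM : 1 <= INR m) by (apply (le_INR 1); lia).
  assert (0 < / (2 * INR (2 * m))) by (apply Rinv_0_lt_compat; rewrite mult_INR; simpl; lra).
  assert (g m <= / (2 * INR m)) by (unfold g; apply Rinv_le_contravar; lra).
  assert (/ (2 * INR m) = / INR m / 2) by (field; lra).
  lra.
Qed.

Lemma d_low n : (1 <= n)%nat -> ln (2 * PI) / 2 + g n <= d n.
Proof.
  intros Hn.
  assert (Hall : forall m, (n <= m)%nat -> ln (2 * PI) / 2 + g n - / INR m <= d n).
  { intros m Hm. assert (H1 := tele_lo n (m - n) Hn). replace (n + (m - n))%nat with m in H1 by lia.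
    assert (H2 := dm_low m ltac:(lia)). lra. }
  apply Rnot_lt_le. intros Hc.
  set (e := ln (2 * PI) / 2 + g n - d n).
  assert (He : 0 < e) by (unfold e; lra).
  destruct (archimed (/ e)) as [Hup _].
  set (m := Nat.max n (Z.to_nat (up (/ e)))).
  assert (Hm1 : (n <= m)%nat) by lia.
  assert (Hm2 : IZR (up (/ e)) <= INR m).
  { assert (0 < up (/ e))%Z.
    { apply lt_IZR. assert (0 < / e) by (apply Rinv_0_lt_compat; lra). lra. }
    rewrite INR_IZR_INZ. apply IZR_le. unfold m. lia. }
  assert (Hmpos : 0 < INR m) by (apply lt_0_INR; lia).
  assert (/ INR m < e).
  { rewrite <- (Rinv_inv e). apply Rinv_lt_contravar. apply Rmult_lt_0_compat. apply Rinv_0_lt_compat; lra. lra. lra. }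
  assert (Hq := Hall m Hm1). unfold e in *. lra.
Qed.


Lemma key n : (1 <= n)%nat -> exists u delta,
  0 <= delta /\ INR n * u <= 1 - /INR n / 2 + /INR n ^ 2 / 3 /\
  xseq n = (INR n * u - ln (2 * PI) / 2 - / (12 * INR n + 1) - ln (INR n) / 2 + INR n - delta) / (INR n * (INR n + 1)).
Proof.
  intros Hn. assert (HN : 1 <= INR n) by (apply (le_INR 1); lia).
  assert (Hd := d_low n Hn). unfold d, g in Hd.
  exists (ln (1 + / INR n)), (d n - (ln (2 * PI) / 2 + g n)).
  split. unfold d, g. lra.
  split.
  { assert (HA := lnA (/ INR n) ltac:(left; apply Rinv_0_lt_compat; lra)).
    apply Rle_trans with (INR n * (/ INR n - (/ INR n)^2/2 + (/INR n)^3/3)).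
    apply Rmult_le_compat_l; lra. right. field. lra. }
  unfold xseq, ell, Rpower. rewrite ln_div by apply exp_pos. rewrite !ln_exp.
  fold (L (S n)). fold (L n). rewrite L_S, S_INR, lnratio by lra. unfold d, g. field. lra.
Qed.

Theorem mainTheorem6 :
  (forall n : nat, (2 <= n)%nat ->
     xseq n <= 1 / INR n
               - ln (INR n) / (2 * INR n * (INR n + 1))
               - ln (2 * PI) / (2 * INR n * (INR n + 1))
               - 83 / (144 * INR n ^ 3)
               + 3 / (2 * INR n ^ 4)) /\
  (forall n : nat, (3 <= n)%nat ->
     xseq n <= 1 / INR n
               - ln (INR n) / (2 * INR n * (INR n + 1))
               - ln (2 * PI) / (2 * INR n * (INR n + 1))).
Proof.
  split.
  - intros n Hn. destruct (key n ltac:(lia)) as [u [dl [Hdl [Hu Hx]]]].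
    assert (HN : 1 <= INR n) by (apply (le_INR 1); lia).
    rewrite Hx. set (N := INR n) in *. set (Lam := ln N). set (P := ln (2 * PI)).
    set (x := / N) in *.
    assert (Hx0 : 0 < x) by (apply Rinv_0_lt_compat; lra).
    assert (Hx1 : x <= 1) by (unfold x; rewrite <- Rinv_1; apply Rinv_le_contravar; lra).
    set (num := 1 - 83/144*(x + x^2) + 3/2*(x^2 + x^3) - N*u + x/(12+x) + dl).
    assert (E : 1 / N - Lam / (2 * N * (N + 1)) - P / (2 * N * (N + 1)) - 83 / (144 * N ^ 3) + 3 / (2 * N ^ 4)
       - (N * u - P / 2 - / (12 * N + 1) - Lam / 2 + N - dl) / (N * (N + 1)) = num / (N * (N + 1))).
    { unfold num, x. field. repeat split; lra. }
    assert (Hq : x/13 <= x/(12+x)).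
    { apply Rmult_le_compat_l. lra. apply Rinv_le_contravar; lra. }
    assert (Hnum : 0 <= num).
    { unfold num. assert (0 <= x^3) by (apply pow_le; lra). assert (0 <= x^2) by (apply pow_le; lra). replace (/ N ^ 2) with (x^2) in Hu by (unfold x; field; lra). lra. }
    assert (0 <= num / (N * (N + 1))) by (apply Rdiv_le_0_compat; nra).
    lra.
  - intros n Hn. destruct (key n ltac:(lia)) as [u [dl [Hdl [Hu Hx]]]].
    assert (HN : 1 <= INR n) by (apply (le_INR 1); lia).
    rewrite Hx. set (N := INR n) in *. set (Lam := ln N). set (P := ln (2 * PI)).
    set (num := 1 - N*u + / (12 * N + 1) + dl).
    assert (E : 1 / N - Lam / (2 * N * (N + 1)) - P / (2 * N * (N + 1))
       - (N * u - P / 2 - / (12 * N + 1) - Lam / 2 + N - dl) / (N * (N + 1)) = num / (N * (N + 1))).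
    { unfold num. field. repeat split; lra. }
    assert (0 < / N) by (apply Rinv_0_lt_compat; lra).
    assert (/N <= 1) by (rewrite <- Rinv_1; apply Rinv_le_contravar; lra).
    assert (0 < / (12 * N + 1)) by (apply Rinv_0_lt_compat; lra).
    assert (Hnum : 0 <= num). { unfold num. replace (/ N ^ 2) with ((/N)^2) in Hu by (field; lra). nra. }
    assert (0 <= num / (N * (N + 1))) by (apply Rdiv_le_0_compat; nra).
    lra.
Qed.
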